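(* Let $\mathcal{P}$ be a hereditary property of ordered graphs. Suppose that for arbitrarily large values of $k$ some ordered graph in $\mathcal{P}$ contains a $k$-structure of Type 1 or of Type 2. Then $|\mathcal{P}_n| \geqslant 2^{n-1}$ for every $n \in \mathbb{N}$.
   Context: Ordered graphs of order $n$ have vertex set $[n]$ with the natural order; a hereditary property is a collection of ordered graphs closed under order-preserving isomorphism and induced ordered subgraphs; $\mathcal{P}_n$ is the set of members with vertex set $[n]$. A $k$-structure of Type 1 in $G$ consists of vertices $y$ and $x_1<\dots<x_{2k}$ with $y<x_1$ or $y>x_{2k}$, such that for $1\leqslant i<2k$, $yx_i\in E(G)$ iff $yx_{i+1}\notin E(G)$. A $k$-structure of Type 2 is one of Type 2(a): vertices $x_1<\dots<x_{2k}<y_1<\dots<y_{2k}$, or of Type 2(b): vertices $x_1<\dots<x_{2k}<y_{2k}<\dots<y_1$, in either case such that for $1\leqslant i<2k$, $x_iy_i\in E(G)$ iff $x_{i+1}y_{i+1}\notin E(G)$. *)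

(* Defs.v *)
From mathcomp Require Import all_boot all_order.
Set Implicit Arguments. Unset Strict Implicit. Unset Printing Implicit Defensive.

(* An ordered graph of order n: vertex set 'I_n = {0,..,n-1} with its natural
   order; the edge set is a set of ordered pairs that must be symmetric and
   irreflexive (see [is_graph]). *)
Definition ograph (n : nat) := {set 'I_n * 'I_n}.

Definition is_graph n (G : ograph n) : bool :=
  [forall u, forall v, ((u, v) \in G) == ((v, u) \in G)] &&
  [forall u, (u, u) \notin G].

Definition adj n (G : ograph n) (u v : 'I_n) : bool := (u, v) \in G.

(* A property of ordered graphs: for each order n, a predicate on graphs on
   [n] (only its members satisfying [is_graph] matter). Since the vertex set
   is [n] with its natural order, closure under order-preserving isomorphism
   is automatic. *)
Definition oprop := forall n : nat, pred (ograph n).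

Definition induced m n (G : ograph n) (f : 'I_m -> 'I_n) : ograph m :=
  [set p : 'I_m * 'I_m | (f p.1, f p.2) \in G].

Definition strictly_increasing m n (f : 'I_m -> 'I_n) : Prop :=
  forall i j : 'I_m, i < j -> f i < f j.

Definition hereditary (P : oprop) : Prop :=
  forall m n (G : ograph n) (f : 'I_m -> 'I_n),
    is_graph G -> P n G -> strictly_increasing f -> P m (induced G f).

Definition P_n (P : oprop) (n : nat) : {set ograph n} :=
  [set G : ograph n | is_graph G && P n G].

(* Sequences indexed by i = 0 .. 2k-1 (x_{i+1} in the paper is x i here). *)
Definition incr_upto n (len : nat) (x : nat -> 'I_n) : Prop :=
  forall i j, i < j -> j < len -> x i < x j.

Definition decr_upto n (len : nat) (x : nat -> 'I_n) : Prop :=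
  forall i j, i < j -> j < len -> x j < x i.

Definition kstruct1 n (G : ograph n) (k : nat) : Prop :=
  exists (y : 'I_n) (x : nat -> 'I_n),
    incr_upto (2 * k) x /\
    (y < x 0 \/ x (2 * k).-1 < y) /\
    (forall i, i.+1 < 2 * k -> adj G y (x i) = ~~ adj G y (x i.+1)).

Definition kstruct2a n (G : ograph n) (k : nat) : Prop :=
  exists (x y : nat -> 'I_n),
    incr_upto (2 * k) x /\ incr_upto (2 * k) y /\
    x (2 * k).-1 < y 0 /\
    (forall i, i.+1 < 2 * k -> adj G (x i) (y i) = ~~ adj G (x i.+1) (y i.+1)).

Definition kstruct2b n (G : ograph n) (k : nat) : Prop :=
  exists (x y : nat -> 'I_n),
    incr_upto (2 * k) x /\ decr_upto (2 * k) y /\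
    x (2 * k).-1 < y (2 * k).-1 /\
    (forall i, i.+1 < 2 * k -> adj G (x i) (y i) = ~~ adj G (x i.+1) (y i.+1)).

Definition kstruct2 n (G : ograph n) (k : nat) : Prop :=
  kstruct2a G k \/ kstruct2b G k.

(* Main.v *)
Require Import Defs.
From mathcomp Require Import all_boot all_order zify.
Set Implicit Arguments. Unset Strict Implicit. Unset Printing Implicit Defensive.


Lemma adj_sym N (G : ograph N) u v : is_graph G -> adj G u v = adj G v u.
Proof. by case/andP=> /forallP H _; move: (H u) => /forallP /(_ v) /eqP. Qed.

Lemma index_sorted (s : seq nat) x :
  sorted ltn s -> x \in s -> index x s = count (fun y => y < x) s.
Proof.
elim: s => [//|y s IH] /= Hp.
have Hs : sorted ltn s by case: s Hp {IH} => //= z s /andP[].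
have Hall := order_path_min ltn_trans Hp.
rewrite in_cons eq_sym; case: eqP => [Exy|Hne] /=.
  subst y; rewrite ltnn add0n => _; apply/esym/eqP; rewrite -leqn0 leqNgt -has_count.
  by apply/hasPn => z /(allP Hall) /= Hz; rewrite -leqNgt ltnW.
move=> Hx; rewrite IH //.
by have := allP Hall x Hx => /= ->.
Qed.

Section Embed.
Variables (N n : nat) (v : nat -> 'I_N).

Definition rnk (u : 'I_N) := count (fun j => v j < u) (iota 0 n.+1).
Definition sv := sort leq [seq val (v j) | j <- iota 0 n.+1].
Definition femb (i : 'I_n.+1) : 'I_N := insubd (v 0) (nth 0 sv i).

Hypothesis vinj : forall i j, i < n.+1 -> j < n.+1 -> v i = v j -> i = j.

Lemma size_sv : size sv = n.+1.
Proof. by rewrite size_sort size_map size_iota. Qed.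

Lemma mem_sv x : (x \in sv) = (x \in [seq val (v j) | j <- iota 0 n.+1]).
Proof. by rewrite mem_sort. Qed.

Lemma sorted_sv : sorted ltn sv.
Proof.
rewrite ltn_sorted_uniq_leq sort_uniq sort_sorted ?andbT; last exact: leq_total.
rewrite map_inj_in_uniq ?iota_uniq // => i j; rewrite !mem_iota /= !add0n.
by move=> Hi Hj /val_inj; apply: vinj.
Qed.

Lemma nth_sv_lt i : i < n.+1 -> nth 0 sv i < N.
Proof.
move=> Hi; have : nth 0 sv i \in sv by rewrite mem_nth // size_sv.
rewrite mem_sv => /mapP[j _ ->]; exact: ltn_ord.
Qed.

Lemma val_femb i : nat_of_ord (femb i) = nth 0 sv i.
Proof. by rewrite /femb val_insubd nth_sv_lt. Qed.

Lemma femb_incr : strictly_increasing femb.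
Proof.
move=> i j Hij; rewrite !val_femb.
apply: (sorted_ltn_nth ltn_trans) => //; first exact: sorted_sv.
  by rewrite inE size_sv.
by rewrite inE size_sv.
Qed.

Lemma rnk_lt i : i < n.+1 -> rnk (v i) < n.+1.
Proof.
move=> Hi; rewrite /rnk.
have Hm : val (v i) \in sv by rewrite mem_sv; apply: (map_f (fun j => val (v j))); rewrite mem_iota.
have := Hm; rewrite -index_mem size_sv index_sorted ?sorted_sv //.
have Hp : perm_eq sv [seq val (v j) | j <- iota 0 n.+1] by rewrite /sv perm_sort.
  rewrite (permP Hp).
by rewrite count_map.
Qed.

Lemma femb_rnk i : i < n.+1 -> femb (inord (rnk (v i))) = v i.
Proof.
move=> Hi; apply: val_inj; rewrite /= val_femb inordK ?rnk_lt //.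
have Hm : val (v i) \in sv by rewrite mem_sv; apply: (map_f (fun j => val (v j))); rewrite mem_iota.
have -> : rnk (v i) = index (val (v i)) sv.
  rewrite index_sorted ?sorted_sv //.
  have Hp : perm_eq sv [seq val (v j) | j <- iota 0 n.+1] by rewrite /sv perm_sort.
  rewrite (permP Hp).
  by rewrite count_map.
by rewrite nth_index.
Qed.

Lemma induced_rnk (G : ograph N) i j : i < n.+1 -> j < n.+1 ->
  ((inord (rnk (v i)), inord (rnk (v j))) \in induced G femb) = adj G (v i) (v j).
Proof. by move=> Hi Hj; rewrite /induced inE /= !femb_rnk. Qed.

End Embed.

Lemma induced_is_graph N m (G : ograph N) (f : 'I_m -> 'I_N) :
  is_graph G -> is_graph (induced G f).
Proof.
case/andP=> /forallP H1 /forallP H2; apply/andP; split.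
  apply/forallP=> u; apply/forallP=> w; rewrite !inE /=.
  by move: (H1 (f u)) => /forallP /(_ (f w)).
by apply/forallP=> u; rewrite inE /=; apply: H2.
Qed.

Lemma count_framework (P : oprop) N (G : ograph N) n (T : finType)
    (v : T -> nat -> 'I_N) :
  hereditary P -> G \in P_n P N -> 2 ^ n <= #|T| ->
  (forall t i j, i < n.+1 -> j < n.+1 -> v t i = v t j -> i = j) ->
  (forall t t', t != t' -> exists i j i' j',
     [/\ i < n.+1, j < n.+1, i' < n.+1 & j' < n.+1] /\
     [/\ rnk n (v t) (v t i) = rnk n (v t') (v t' i'),
         rnk n (v t) (v t j) = rnk n (v t') (v t' j') &
         adj G (v t i) (v t j) != adj G (v t' i') (v t' j')]) ->
  2 ^ n <= #|P_n P n.+1|.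
Proof.
move=> Hher; rewrite inE => /andP[HG HP] HT Hinj Hdist.
pose F t := induced G (@femb N n (v t)).
have HF : injective F.
  move=> t t' HFt; apply/eqP; apply/negPn/negP => /Hdist [i [j [i' [j' [[Hi Hj Hi' Hj'] [E1 E2 E3]]]]]].
  move: E3; rewrite -(induced_rnk (Hinj t) G Hi Hj) -(induced_rnk (Hinj t') G Hi' Hj') -/(F t) -/(F t') HFt E1 E2.
  by rewrite eqxx.
apply: (leq_trans HT); rewrite -(card_imset predT HF); apply: subset_leq_card.
apply/subsetP=> g /imsetP[t _ ->]; rewrite inE; apply/andP; split.
  exact: induced_is_graph.
rewrite /F; apply: Hher => //; exact: femb_incr (Hinj t).
Qed.


Definition tb n (t : {ffun 'I_n -> bool}) (j : nat) : bool :=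
  if insub j is Some o then t o else false.

Lemma tb_ord n (t : {ffun 'I_n -> bool}) (o : 'I_n) : tb t o = t o.
Proof. by rewrite /tb valK. Qed.

Lemma ffun_neq n (t t' : {ffun 'I_n -> bool}) : t != t' ->
  exists j, j < n /\ tb t j != tb t' j.
Proof.
move=> Hne; case: (boolP [forall o, t o == t' o]) => [/forallP H|].
  by case/eqP: Hne; apply/ffunP => o; apply/eqP.
rewrite negb_forall => /existsP[o Ho]; exists o; split => //.
by rewrite !tb_ord.
Qed.

Lemma dbl_lt a b (e e' : bool) : a != b -> (a.*2 + e < b.*2 + e') = (a < b).
Proof.
move=> Hab; case: (ltngtP a b) => [H|H|H]; last by rewrite H eqxx in Hab.
  by apply/idP; case: e; case: e'; lia.
by apply/negbTE; case: e; case: e'; lia.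
Qed.

Lemma dbl_inj a b (e e' : bool) : a.*2 + e = b.*2 + e' -> a = b.
Proof. by case: e; case: e'; lia. Qed.

Lemma odd_dbl a (e : bool) : odd (a.*2 + e) = e.
Proof. by rewrite oddD odd_double; case: e. Qed.

Section Type1.
Variables (P : oprop) (N : nat) (G : ograph N) (y : 'I_N) (z : nat -> 'I_N)
  (K : nat) (dz : bool) (n : nat).
Hypotheses (Hher : hereditary P) (HG : G \in P_n P N) (HnK : n <= K).
Hypothesis Hz : forall i j, i < j -> j < 2 * K -> if dz then z i < z j else z j < z i.
Hypothesis Hy : (forall i, i < 2 * K -> y < z i) \/ (forall i, i < 2 * K -> z i < y).
Hypothesis Halt : forall i, i.+1 < 2 * K -> adj G y (z i) = ~~ adj G y (z i.+1).

Lemma adj_z i : i < 2 * K -> adj G y (z i) = adj G y (z 0) (+) odd i.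
Proof.
elim: i => [|i IH] Hi; first by rewrite addbF.
move: (Halt Hi) (IH (ltnW Hi)) => -> /=.
by case: (adj G y (z i.+1)); case: (odd i); case: (adj G y (z 0)).
Qed.

Lemma z_inj i j : i < 2 * K -> j < 2 * K -> z i = z j -> i = j.
Proof.
move=> Hi Hj E; case: (ltngtP i j) => // H.
  by have := Hz H Hj; rewrite E; case: dz; rewrite ltnn.
by have := Hz H Hi; rewrite E; case: dz; rewrite ltnn.
Qed.

Lemma z_lt i j : i < 2 * K -> j < 2 * K -> (z i < z j) = if dz then i < j else j < i.
Proof.
move=> Hi Hj; case: (ltngtP i j) => H.
- by have := Hz H Hj; case: dz => // H1; apply/negbTE; rewrite -leqNgt ltnW.
- by have := Hz H Hi; case: dz => // H1; apply/negbTE; rewrite -leqNgt ltnW.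
- by rewrite H ltnn; case: dz.
Qed.

Lemma y_lt i : i < 2 * K -> (y < z i) = (y < z 0).
Proof.
move=> Hi; have H0 : 0 < 2 * K by lia.
case: Hy => H.
  by rewrite !H.
by apply/idP/idP => H1; [ have := H i Hi | have := H 0 H0]; lia.
Qed.

Lemma z_lty i : i < 2 * K -> (z i < y) = (z 0 < y).
Proof.
move=> Hi; have H0 : 0 < 2 * K by lia.
case: Hy => H.
  by apply/idP/idP => H1; [ have := H i Hi | have := H 0 H0]; lia.
by rewrite !H.
Qed.

Definition e1 (t : {ffun 'I_n -> bool}) j := tb t j (+) adj G y (z 0).
Definition v1 (t : {ffun 'I_n -> bool}) (i : nat) : 'I_N :=
  if i is j.+1 then z (j.*2 + e1 t j) else y.

Lemma idx_lt j (e : bool) : j < n -> j.*2 + e < 2 * K.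
Proof. by move=> Hj; case: e; lia. Qed.

Lemma v1_inj t i j : i < n.+1 -> j < n.+1 -> v1 t i = v1 t j -> i = j.
Proof.
case: i => [|i]; case: j => [|j] //= Hi Hj.
- move=> E; have := y_lt (idx_lt (e1 t j) Hj); have := z_lty (idx_lt (e1 t j) Hj).
  rewrite -E ltnn; have H0 : 0 < 2 * K by lia.
  by case: Hy => H; [have := H 0 H0 | have := H 0 H0] => ->.
- move=> E; have := y_lt (idx_lt (e1 t i) Hi); have := z_lty (idx_lt (e1 t i) Hi).
  rewrite E ltnn; have H0 : 0 < 2 * K by lia.
  by case: Hy => H; [have := H 0 H0 | have := H 0 H0] => ->.
- by move/z_inj => /(_ (idx_lt _ Hi) (idx_lt _ Hj)) /dbl_inj ->.
Qed.

Lemma v1_pat t i j : i < n.+1 -> j < n.+1 ->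
  (v1 t j < v1 t i) =
  if i is i'.+1 then (if j is j'.+1 then (if i == j then false else if dz then j < i else i < j)
                      else (y < z 0))
  else (if j is j'.+1 then z 0 < y else false).
Proof.
case: i => [|i]; case: j => [|j] //= Hi Hj.
- by rewrite ltnn.
- by rewrite z_lty // idx_lt.
- by rewrite y_lt // idx_lt.
- rewrite z_lt ?idx_lt // eqSS; case: eqP => [->|/eqP Hne].
    by case: dz; rewrite ltnn.
  by case: dz; rewrite dbl_lt // eq_sym.
Qed.

Lemma type1_count : 2 ^ n <= #|P_n P n.+1|.
Proof.
apply: (@count_framework P N G n _ v1 Hher HG).
  by rewrite card_ffun card_bool card_ord.
  exact: v1_inj.
move=> t t' /ffun_neq [j [Hj Hne]].
exists 0, j.+1, 0, j.+1; split => //; split.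
- apply: eq_in_count => k; rewrite mem_iota add0n => /andP[_ Hk].
  by rewrite (v1_pat t (i := 0) (j := k)) // (v1_pat t' (i := 0) (j := k)).
- apply: eq_in_count => k; rewrite mem_iota add0n => /andP[_ Hk].
  by rewrite (v1_pat t (i := j.+1) (j := k)) // (v1_pat t' (i := j.+1) (j := k)).
rewrite /= (adj_z (idx_lt (e1 t j) Hj)) (adj_z (idx_lt (e1 t' j) Hj)) !odd_dbl /e1.
by move: Hne; case: (tb t j); case: (tb t' j); case: (adj G y (z 0)).
Qed.
End Type1.


Lemma count_pre_S (p : pred nat) r : count p (iota 0 r.+1) = count p (iota 0 r) + p r.
Proof. by rewrite -addn1 iotaD count_cat /= addn0. Qed.

Lemma ivl (p : pred nat) m i : i < count p (iota 0 m) ->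
  exists r, [/\ r < m, p r & count p (iota 0 r) = i].
Proof.
elim: m => [//|m IH]; rewrite count_pre_S.
case: (ltnP i (count p (iota 0 m))) => [H _|H1 H2].
  by case: (IH H) => r [Hr Hp Hc]; exists r; split => //; lia.
case Hpm: (p m) H2; last by rewrite addn0 => H; lia.
by rewrite addn1 ltnS => H2; exists m; split => //; lia.
Qed.

Lemma count_lt_pre (p : pred nat) r m : r <= m ->
  count (fun j => p j && (j < r)) (iota 0 m) = count p (iota 0 r).
Proof.
move=> Hr; rewrite -(subnKC Hr) iotaD count_cat add0n.
rewrite (eq_in_count (a1 := fun j => p j && (j < r)) (a2 := p)); last first.
  by move=> j; rewrite mem_iota add0n => /andP[_ ->]; rewrite andbT.
rewrite (eq_in_count (a1 := fun j => p j && (j < r)) (a2 := pred0)); last first.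
  by move=> j; rewrite mem_iota => /andP[H _]; rewrite ltnNge H andbF.
by rewrite count_pred0 addn0.
Qed.

Lemma count_gt_suf (p : pred nat) r m : r < m ->
  count (fun j => p j && (r < j)) (iota 0 m) = count p (iota 0 m) - count p (iota 0 r.+1).
Proof.
move=> Hr; rewrite -(subnKC Hr) iotaD !count_cat add0n.
rewrite (eq_in_count (a1 := fun j => p j && (r < j)) (a2 := pred0)); last first.
  by move=> j; rewrite mem_iota add0n => /andP[_ H]; rewrite ltnNge -ltnS H andbF.
rewrite (eq_in_count (a1 := fun j => p j && (r < j)) (a2 := p) (s := iota (0 + r.+1) _)); last first.
  by move=> j; rewrite mem_iota add0n => /andP[H _]; rewrite H andbT.
by rewrite count_pred0 add0n addKn.
Qed.

Lemma count_pre_mono (p : pred nat) r r' : r <= r' -> count p (iota 0 r) <= count p (iota 0 r').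
Proof. by move=> H; rewrite -(subnKC H) iotaD count_cat leq_addr. Qed.


Lemma count_pre_ext (p q : pred nat) r : (forall j, j < r -> p j = q j) ->
  count p (iota 0 r) = count q (iota 0 r).
Proof. by move=> H; apply: eq_in_count => j; rewrite mem_iota add0n => /andP[_ /H]. Qed.

Lemma count_pre_le (p : pred nat) r : count p (iota 0 r) <= r.
Proof. by rewrite -{2}(size_iota 0 r) count_size. Qed.

Lemma count_pre_C (p : pred nat) r : count (predC p) (iota 0 r) = r - count p (iota 0 r).
Proof. by have := count_predC p (iota 0 r); rewrite size_iota; lia. Qed.

Lemma first_diff (p : pred nat) m : (exists r, r < m /\ p r) ->
  exists r, [/\ r < m, p r & forall r', r' < r -> ~~ p r'].
Proof.
move=> H; have H' : exists r, p r by case: H => r [_ ?]; exists r.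
case: (ex_minnP H') => r Hr Hmin; exists r; split => //.
  by case: H => r' [Hr' Hp]; apply: leq_ltn_trans (Hmin _ Hp) Hr'.
by move=> r' Hr'; apply/negP => /Hmin; lia.
Qed.

Section Canon.
Variables (P : oprop) (N : nat) (G : ograph N) (X Y : nat -> 'I_N) (L : nat)
  (dir : bool) (al be c1 c2 dd : bool).
Hypotheses (Hher : hereditary P) (HG : G \in P_n P N).
Hypothesis HX : forall s t, s < t -> t < L -> X s < X t.
Hypothesis HY : forall s t, s < t -> t < L -> if dir then Y s < Y t else Y t < Y s.
Hypothesis HXY : forall s t, s < L -> t < L -> X s < Y t.
Hypothesis Hal : forall s t, s < L -> t < L -> s != t -> adj G (X s) (X t) = al.
Hypothesis Hbe : forall s t, s < L -> t < L -> s != t -> adj G (Y s) (Y t) = be.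
Hypothesis Hc : forall s t, s < L -> t < L ->
  adj G (X s) (Y t) = if s < t then c1 else if t < s then c2 else dd.

Lemma X_lt s t : s < L -> t < L -> (X s < X t) = (s < t).
Proof.
move=> Hs Ht; case: (ltngtP s t) => H.
- exact: HX.
- by apply/negbTE; rewrite -leqNgt ltnW // HX.
- by rewrite H ltnn.
Qed.

Lemma Y_lt s t : s < L -> t < L -> (Y s < Y t) = if dir then s < t else t < s.
Proof.
move=> Hs Ht; case: (ltngtP s t) => H.
- have := HY H Ht; case: dir => // H1; apply/negbTE; rewrite -leqNgt ltnW //.
- have := HY H Hs; case: dir => // H1; apply/negbTE; rewrite -leqNgt ltnW //.
- by rewrite H ltnn; case: dir.
Qed.

Lemma X_inj s t : s < L -> t < L -> X s = X t -> s = t.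
Proof.
move=> Hs Ht E; case: (ltngtP s t) => // H.
  by have := X_lt Hs Ht; rewrite E ltnn H.
by have := X_lt Ht Hs; rewrite E ltnn H.
Qed.

Lemma Y_inj s t : s < L -> t < L -> Y s = Y t -> s = t.
Proof.
move=> Hs Ht E; case: (ltngtP s t) => // H.
  by have := Y_lt Hs Ht; have := Y_lt Ht Hs; rewrite E ltnn H (ltnNge t s) (ltnW H); case: dir.
by have := Y_lt Hs Ht; have := Y_lt Ht Hs; rewrite E ltnn H (ltnNge s t) (ltnW H); case: dir.
Qed.

Lemma XY_neq s t : s < L -> t < L -> X s != Y t.
Proof. by move=> Hs Ht; apply/eqP => E; have := HXY Hs Ht; rewrite E ltnn. Qed.

Definition distP n (v v' : nat -> 'I_N) := exists i j i' j',
     [/\ i < n.+1, j < n.+1, i' < n.+1 & j' < n.+1] /\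
     [/\ rnk n v (v i) = rnk n v' (v' i'),
         rnk n v (v j) = rnk n v' (v' j') &
         adj G (v i) (v j) != adj G (v' i') (v' j')].

Lemma distP_sym n v v' : distP n v v' -> distP n v' v.
Proof.
case=> i [j [i' [j' [[H1 H2 H3 H4] [E1 E2 E3]]]]].
by exists i', j', i, j; split; split => //; rewrite eq_sym.
Qed.


Lemma count_orC (p q : pred nat) s :
  count (fun j => p j || (~~ p j && q j)) s = count p s + count (fun j => ~~ p j && q j) s.
Proof. elim: s => //= x s ->; case: (p x); case: (q x) => /=; lia. Qed.

Section CType.
Variable n : nat.
Hypothesis HnL : n < L.
Variable pf : bool.

Definition wd (t : {ffun 'I_n -> bool}) r :=
  if pf then (if r is r'.+1 then tb t r' else true) else (if r == n then true else tb t r).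
Definition vC t r := if wd t r then X r else Y r.
Definition aC t := count (wd t) (iota 0 n.+1).

Lemma ltL r : r < n.+1 -> r < L.
Proof. by move=> H; apply: leq_trans HnL. Qed.

Lemma vC_inj t i j : i < n.+1 -> j < n.+1 -> vC t i = vC t j -> i = j.
Proof.
move=> Hi Hj; rewrite /vC; case: (wd t i); case: (wd t j).
- by apply: X_inj; apply: ltL.
- by move=> E; have := XY_neq (ltL Hi) (ltL Hj); rewrite E eqxx.
- by move=> E; have := XY_neq (ltL Hj) (ltL Hi); rewrite E eqxx.
- by apply: Y_inj; apply: ltL.
Qed.

Lemma rkX t r : r < n.+1 -> wd t r -> rnk n (vC t) (X r) = count (wd t) (iota 0 r).
Proof.
move=> Hr Hw; rewrite /rnk -(count_lt_pre (wd t) (ltnW Hr)).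
apply: eq_in_count => j; rewrite mem_iota add0n => /andP[_ Hj]; rewrite /vC.
case: (wd t j) => /=; first by rewrite X_lt ?ltL.
by apply/negbTE; rewrite -leqNgt ltnW // HXY ?ltL.
Qed.

Definition nY t := count (predC (wd t)) (iota 0 n.+1).

Lemma rkY t r : r < n.+1 -> ~~ wd t r -> rnk n (vC t) (Y r) =
  aC t + (if dir then count (predC (wd t)) (iota 0 r)
          else nY t - count (predC (wd t)) (iota 0 r.+1)).
Proof.
move=> Hr Hw; rewrite /rnk.
rewrite (eq_in_count (a2 := fun j => wd t j || (~~ wd t j && (if dir then j < r else r < j)))); last first.
  move=> j; rewrite mem_iota add0n => /andP[_ Hj]; rewrite /vC.
  by case: (wd t j) => /=; [rewrite HXY ?ltL | rewrite Y_lt ?ltL].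
rewrite count_orC /aC; congr (_ + _); case: dir.
  exact: (count_lt_pre (predC (wd t)) (ltnW Hr)).
exact: (count_gt_suf (predC (wd t)) Hr).
Qed.

Lemma aC_nY t : aC t + nY t = n.+1.
Proof. by rewrite /aC /nY count_predC size_iota. Qed.

Lemma rkY0 t r : r < n.+1 -> ~~ wd t r ->
  count (predC (wd t)) (iota 0 r) = (if dir then 0 else (nY t).-1) ->
  rnk n (vC t) (Y r) = aC t.
Proof.
move=> Hr Hw Hq; rewrite rkY //; case: dir Hq => Hq; first by rewrite Hq addn0.
have : count (predC (wd t)) (iota 0 r.+1) <= nY t by apply: count_pre_mono.
rewrite count_pre_S Hq /= Hw; lia.
Qed.

Lemma wd_piv t : wd t (if pf then 0 else n).
Proof. by rewrite /wd; case: pf => //; rewrite eqxx. Qed.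

Lemma aC_pos t : 0 < aC t.
Proof.
rewrite /aC -has_count; apply/hasP; exists (if pf then 0 else n); last exact: wd_piv.
by rewrite mem_iota add0n; case: pf => //=; rewrite ltnSn.
Qed.

Lemma exY t t' : aC t < aC t' -> exists r0, [/\ r0 < n.+1, ~~ wd t r0 &
   rnk n (vC t) (vC t r0) = aC t].
Proof.
move=> Ha.
have Ha' : aC t' <= n.+1 by rewrite /aC -{2}(size_iota 0 n.+1) count_size.
have HnY : 0 < nY t by have := aC_nY t; lia.
have Hi : (if dir then 0 else (nY t).-1) < count (predC (wd t)) (iota 0 n.+1) by case: dir; rewrite -/(nY t); lia.
case: (ivl Hi) => r0 [Hr0 Hw Hq]; exists r0; split => //.
by rewrite /vC (negbTE Hw) rkY0.
Qed.

Lemma exX t i : i < aC t -> exists r, [/\ r < n.+1, wd t r &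
   rnk n (vC t) (vC t r) = i].
Proof.
move=> Hi; case: (ivl Hi) => r [Hr Hw Hq]; exists r; split => //.
by rewrite /vC Hw rkX.
Qed.

Lemma distC_lt t t' : aC t < aC t' -> al = (if pf then c2 else c1) -> c1 != c2 ->
  distP n (vC t) (vC t').
Proof.
move=> Ha Hal' Hc12; case: (exY Ha) => r0 [Hr0 Hw0 Hrk0].
have Hpos := aC_pos t.
case Epf: pf Hal' => Hal'.
- have Ht0 : wd t 0 by have := wd_piv t; rewrite Epf.
  have Ht'0 : wd t' 0 by have := wd_piv t'; rewrite Epf.
  case: (exX Ha) => r1 [Hr1 Hw1 Hrk1].
  have Hr1n0 : r1 != 0.
    apply/eqP => E; move: Hrk1; rewrite E /vC Ht'0 rkX //=; lia.
  have Hr0n0 : r0 != 0 by apply/eqP => E; rewrite E Ht0 in Hw0.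
  exists 0, r0, 0, r1; split; first by split.
  split.
  + by rewrite /vC Ht0 Ht'0 !rkX.
  + by rewrite Hrk0 Hrk1.
  + rewrite /vC Ht0 Ht'0 (negbTE Hw0) Hw1 Hc ?ltL // Hal ?ltL //; first by rewrite lt0n Hr0n0 Hal'.
    by rewrite eq_sym.
- have Htn : wd t n by have := wd_piv t; rewrite Epf.
  have Hi1 : (aC t).-1 < aC t' by lia.
  case: (exX Hi1) => r1 [Hr1 Hw1 Hrk1].
  case: (exX Ha) => r2 [Hr2 Hw2 Hrk2].
  have Hr0n : r0 < n.
    rewrite ltn_neqAle -ltnS Hr0 andbT; apply/eqP => E; by rewrite E Htn in Hw0.
  have Hr12 : r1 != r2 by apply/eqP => E; move: Hrk1; rewrite E Hrk2; lia.
  exists n, r0, r1, r2; split; first by split.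
  split.
  + rewrite Hrk1 /vC Htn rkX // /aC count_pre_S Htn; lia.
  + by rewrite Hrk0 Hrk2.
  + rewrite /vC Htn (negbTE Hw0) Hw1 Hw2 Hc ?ltL // Hal ?ltL //.
    by rewrite ltnNge (ltnW Hr0n) /= Hr0n Hal' eq_sym.
Qed.


Lemma after_r (p q : pred nat) r r' : (forall k, k < r -> p k = q k) -> q r' ->
  count q (iota 0 r') = count p (iota 0 r) -> r' != r -> r < r'.
Proof.
move=> Hpq Hq Hcnt Hne; rewrite ltn_neqAle eq_sym Hne /=; rewrite leqNgt; apply/negP => Hlt.
have H1 : count p (iota 0 r'.+1) <= count p (iota 0 r) by apply: count_pre_mono.
move: H1; rewrite count_pre_S Hpq // Hq -Hcnt.
rewrite (count_pre_ext (p := p) (q := q) (r := r')); first lia.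
by move=> k Hk; apply: Hpq; apply: ltn_trans Hlt.
Qed.

Lemma distC_eq t t' r : aC t = aC t' -> r < n.+1 -> wd t r -> ~~ wd t' r ->
  (forall k, k < r -> wd t k = wd t' k) -> c1 != c2 -> distP n (vC t) (vC t').
Proof.
move=> Ha Hr Hw Hw' Hpre Hc12.
have HnY : nY t = nY t' by have := aC_nY t; have := aC_nY t'; lia.
have Hpi : count (wd t') (iota 0 r) = count (wd t) (iota 0 r).
  by apply/esym/count_pre_ext.
have HpC : count (predC (wd t)) (iota 0 r) = count (predC (wd t')) (iota 0 r).
  by apply: count_pre_ext => k Hk /=; rewrite Hpre.
have Hi : count (wd t) (iota 0 r) < aC t'.
  rewrite -Ha /aC; apply: leq_trans (count_pre_mono _ Hr); by rewrite count_pre_S Hw addn1.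
case: (ivl Hi) => r1 [Hr1 Hw1 Hq1].
have Hrr1 : r < r1.
  apply: (after_r (p := wd t) (q := wd t')) => //.
  by apply/eqP => E; rewrite -E Hw1 in Hw'.
have Hj : count (predC (wd t')) (iota 0 r) < nY t.
  rewrite HnY /nY; apply: leq_trans (count_pre_mono _ Hr); by rewrite count_pre_S /= Hw' addn1.
case: (ivl Hj) => r2 [Hr2 Hw2 Hq2].
have Hw2' : ~~ wd t r2 := Hw2.
have Hrr2 : r < r2.
  apply: (after_r (p := predC (wd t')) (q := predC (wd t))) => //.
    by move=> k Hk /=; rewrite Hpre.
  by apply/eqP => E; rewrite E /= Hw in Hw2.
exists r, r2, r1, r; split; first by split.
split.
- by rewrite /vC Hw Hw1 !rkX // Hq1.
- rewrite /vC (negbTE Hw2) (negbTE Hw') !rkY // -Ha -HnY.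
  by rewrite !count_pre_S /= Hq2 Hw2' Hw'.
- rewrite /vC Hw (negbTE Hw2) Hw1 (negbTE Hw') !Hc ?ltL // Hrr2 ltnNge (ltnW Hrr1) /= Hrr1.
  done.
Qed.

Lemma ctype_count : c1 != c2 -> al = (if pf then c2 else c1) -> 2 ^ n <= #|P_n P n.+1|.
Proof.
move=> Hc12 Hal'.
apply: (@count_framework P N G n _ vC Hher HG).
- by rewrite card_ffun card_bool card_ord.
- exact: vC_inj.
move=> t t' /ffun_neq [j [Hj Hne]].
have Hex : exists r, r < n.+1 /\ wd t r != wd t' r.
  exists (if pf then j.+1 else j); rewrite /wd; case: pf => /=; split => //; first by lia.
  by rewrite (ltn_eqF Hj).
case: (ltngtP (aC t) (aC t')) => Ha.
- exact: distC_lt.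
- exact/distP_sym/distC_lt.
case: (first_diff Hex) => r [Hr Hne' Hmin].
have Hpre : forall k, k < r -> wd t k = wd t' k by move=> k /Hmin; case: (wd t k); case: (wd t' k).
case Ewt: (wd t r) Hne' => /= Hne'.
- by apply: (distC_eq Ha Hr) => //; rewrite Ewt in Hne'.
- apply/distP_sym; apply: (distC_eq (esym Ha) Hr) => //.
  + by move: Hne'; case: (wd t' r).
  + by rewrite Ewt.
  + by move=> k Hk; rewrite Hpre.
Qed.

End CType.
End Canon.


Lemma slot_lt (M c r c' r' : nat) : r < M -> c < c' -> M * c + r < M * c' + r'.
Proof.
move=> H1 H2; apply: (leq_trans (n := M * c.+1)); first by rewrite mulnS [M * c + r]addnC ltn_add2r.
by apply: leq_trans (leq_addr _ _); rewrite leq_mul2l H2 orbT.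
Qed.

Lemma slot_eq (M c r c' r' : nat) : r < M -> r' < M -> M * c + r = M * c' + r' -> c = c' /\ r = r'.
Proof.
move=> H1 H2 E; case: (ltngtP c c') => H.
- by have := slot_lt r' H1 H; rewrite E ltnn.
- by have := slot_lt r H2 H; rewrite E ltnn.
- by subst c'; split => //; apply/eqP; rewrite -(eqn_add2l (M * c)) E.
Qed.

Lemma slot_le (M c r c' r' : nat) : r < M -> c <= c' -> r < r' -> M * c + r < M * c' + r'.
Proof.
move=> H1; rewrite leq_eqVlt => /orP[/eqP ->|H2] H3; first by rewrite ltn_add2l.
exact: slot_lt.
Qed.

Lemma slot_bound M c r k : r < M -> c <= k -> M * c + r < M * k.+1.
Proof.
move=> Hr Hc; rewrite mulnS [M * c + r]addnC -addSn; apply: leq_add => //.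
by rewrite leq_mul2l Hc orbT.
Qed.

Lemma count_ge_suf (p : pred nat) r m : r <= m ->
  count (fun j => p j && (r <= j)) (iota 0 m) = count p (iota 0 m) - count p (iota 0 r).
Proof.
move=> Hr; rewrite -(subnKC Hr) iotaD !count_cat add0n.
rewrite (eq_in_count (a1 := fun j => p j && (r <= j)) (a2 := pred0)); last first.
  by move=> j; rewrite mem_iota add0n => /andP[_ H]; rewrite leqNgt H andbF.
rewrite (eq_in_count (a1 := fun j => p j && (r <= j)) (a2 := p) (s := iota (0 + r) _)); last first.
  by move=> j; rewrite mem_iota add0n => /andP[H _]; rewrite H andbT.
by rewrite count_pred0 add0n addKn.
Qed.

Lemma count_downclosed (Q : pred nat) m : (forall p p', p <= p' -> Q p' -> Q p) ->
  forall p, p < m -> (p < count Q (iota 0 m)) = Q p.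
Proof.
move=> HQ; elim: m => [//|m IH] p Hp; rewrite count_pre_S.
case HQm: (Q m).
  have Hall : count Q (iota 0 m) = m.
    rewrite -[m in RHS](size_iota 0 m) -count_predT; apply: eq_in_count => j.
    by rewrite mem_iota add0n => /andP[_ Hj]; rewrite (HQ j m) // ltnW.
  by rewrite Hall addn1 Hp (HQ p m) // -ltnS.
rewrite addn0; case: (ltngtP p m) => H.
- exact: IH.
- by move: Hp; rewrite ltnS leqNgt H.
- by subst p; rewrite HQm ltnNge count_pre_le.
Qed.

Section MType.
Variables (P : oprop) (N : nat) (G : ograph N) (X Y : nat -> 'I_N) (L : nat)
  (dir : bool) (al be c dd : bool).
Hypotheses (Hher : hereditary P) (HG : G \in P_n P N).
Hypothesis HX : forall s t, s < t -> t < L -> X s < X t.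
Hypothesis HY : forall s t, s < t -> t < L -> if dir then Y s < Y t else Y t < Y s.
Hypothesis HXY : forall s t, s < L -> t < L -> X s < Y t.
Hypothesis Hal : forall s t, s < L -> t < L -> s != t -> adj G (X s) (X t) = al.
Hypothesis Hbe : forall s t, s < L -> t < L -> s != t -> adj G (Y s) (Y t) = be.
Hypothesis Hc : forall s t, s < L -> t < L -> adj G (X s) (Y t) = if s == t then dd else c.
Hypothesis Hdc : dd != c.
Variable n : nat.
Local Notation nn := n.+1.
Local Notation MM := (2 * nn).+1.
Hypothesis HL : MM * nn.+1 <= L.

Definition cU (U : pred nat) p := count U (iota 0 p.+1).
Definition cV (V : pred nat) q :=
  if dir then count V (iota 0 q.+1) else count V (iota 0 nn) - count V (iota 0 q).
Definition xs (U : pred nat) p := MM * cU U p + (if U p then 0 else p.+1).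
Definition ys (V : pred nat) q :=
  MM * cV V q + (if V q then 0 else if dir then nn + q.+1 else (2 * nn) - q).
Definition vM a U V p := if p < a then X (xs U p) else Y (ys V p).

Definition tok a (U V : pred nat) := [/\ a <= nn, (forall p, U p -> p < a),
  (forall q, V q -> a <= q < nn) & count U (iota 0 nn) = count V (iota 0 nn)].

Lemma xminor U p : p < nn -> (if U p then 0 else p.+1) < MM.
Proof. by move=> Hp; case: (U p); lia. Qed.

Lemma yminor V q : q < nn -> (if V q then 0 else if dir then nn + q.+1 else (2 * nn) - q) < MM.
Proof. by move=> Hq; case: (V q); case: dir; lia. Qed.

Lemma xs_lt U p : p < nn -> xs U p < L.
Proof.
move=> Hp; apply: leq_trans HL; apply: slot_bound; first exact: xminor.
by apply: leq_trans (count_pre_le _ _) _.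
Qed.

Lemma ys_lt V q : q < nn -> ys V q < L.
Proof.
move=> Hq; apply: leq_trans HL; apply: slot_bound; first exact: yminor.
rewrite /cV; case: dir; first by apply: leq_trans (count_pre_le _ _) _.
by apply: leq_trans (leq_subr _ _) (count_pre_le _ _).
Qed.

Lemma xs_mono U p p' : p < p' -> p' < nn -> xs U p < xs U p'.
Proof.
move=> Hpp Hp'; rewrite /xs.
have Hle : cU U p + U p' <= cU U p'.
  by rewrite /cU (count_pre_S U p'); rewrite leq_add2r count_pre_mono.
case: (ltnP (cU U p) (cU U p')) => H.
  by apply: slot_lt => //; apply: xminor; apply: ltn_trans Hp'.
have Ee : cU U p = cU U p' by apply/eqP; rewrite eqn_leq H andbT; apply: leq_trans Hle; apply: leq_addr.
have HU' : U p' = false by apply/negbTE/negP => HU; move: Hle; rewrite Ee HU; lia.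
rewrite Ee HU' ltn_add2l; case: (U p); lia.
Qed.

Lemma ys_mono V q q' : q < q' -> q' < nn ->
  if dir then ys V q < ys V q' else ys V q' < ys V q.
Proof.
move=> Hqq Hq'; rewrite /ys /cV; case Ed: dir.
  have Hle : count V (iota 0 q.+1) + V q' <= count V (iota 0 q'.+1).
    by rewrite (count_pre_S V q') leq_add2r count_pre_mono.
  case: (ltnP (count V (iota 0 q.+1)) (count V (iota 0 q'.+1))) => H.
    by apply: slot_lt => //; have := yminor V (ltn_trans Hqq Hq'); rewrite Ed.
  have Ee : count V (iota 0 q.+1) = count V (iota 0 q'.+1).
    by apply/eqP; rewrite eqn_leq H andbT; apply: leq_trans Hle; apply: leq_addr.
  have HV' : V q' = false by apply/negbTE/negP => HV; move: Hle; rewrite Ee HV; lia.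
  rewrite Ee HV' ltn_add2l; case: (V q); lia.
have Htot : count V (iota 0 q'.+1) <= count V (iota 0 nn) by apply: count_pre_mono.
have Hle : count V (iota 0 q) + V q <= count V (iota 0 q') by rewrite -count_pre_S count_pre_mono.
case: (ltnP (count V (iota 0 nn) - count V (iota 0 q')) (count V (iota 0 nn) - count V (iota 0 q))) => H.
  by apply: slot_lt => //; have := yminor V Hq'; rewrite Ed.
have Hq'le : count V (iota 0 q') <= count V (iota 0 nn) by apply: count_pre_mono; lia.
have Ee : count V (iota 0 q) = count V (iota 0 q').
  have : count V (iota 0 q) <= count V (iota 0 q') by apply: count_pre_mono; lia.
  lia.
have HV : V q = false by apply/negbTE/negP => HV; move: Hle; rewrite Ee HV; lia.
rewrite Ee HV ltn_add2l; case: (V q'); lia.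
Qed.

Lemma vM_mono a U V p p' : tok a U V -> p < p' -> p' < nn -> vM a U V p < vM a U V p'.
Proof.
case=> Ha _ _ _ Hpp Hp'; have Hp : p < nn by apply: ltn_trans Hp'.
rewrite /vM; case: (ltnP p' a) => Hpa.
  by rewrite (ltn_trans Hpp Hpa); apply: HX; [apply: xs_mono | apply: xs_lt].
case: (ltnP p a) => Hpa'; first by apply: HXY; [apply: xs_lt | apply: ys_lt].
have := ys_mono V Hpp Hp'; have := HY (s := ys V p) (t := ys V p'); have := HY (s := ys V p') (t := ys V p).
case: dir => H1 H2 H3; first by apply: H2 => //; apply: ys_lt.
by apply: H1 => //; apply: ys_lt.
Qed.

Lemma rnk_vM a U V p : tok a U V -> p < nn -> rnk n (vM a U V) (vM a U V p) = p.
Proof.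
move=> Hok Hp; rewrite /rnk.
rewrite (eq_in_count (a2 := fun j => predT j && (j < p))); last first.
  move=> j; rewrite mem_iota add0n => /andP[_ Hj] /=.
  case: (ltngtP j p) => H.
  - exact: vM_mono.
  - by apply/negbTE; rewrite -leqNgt ltnW // vM_mono.
  - by rewrite H ltnn.
by rewrite count_lt_pre ?(ltnW Hp) // count_predT size_iota.
Qed.

Lemma vM_inj a U V i j : tok a U V -> i < nn -> j < nn -> vM a U V i = vM a U V j -> i = j.
Proof.
move=> Hok Hi Hj E; case: (ltngtP i j) => // H.
  by have := vM_mono Hok H Hj; rewrite E ltnn.
by have := vM_mono Hok H Hi; rewrite E ltnn.
Qed.

Lemma xs_ys_eq U V p q : p < nn -> q < nn ->
  (xs U p == ys V q) = [&& U p, V q & cU U p == cV V q].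
Proof.
move=> Hp Hq; apply/eqP/idP.
  rewrite /xs /ys => /slot_eq [] //; try (by apply: xminor); try (by apply: yminor).
  move=> -> Hm; rewrite eqxx andbT; move: Hm.
  by case: (U p); case: (V q) => //=; case: dir; lia.
case/and3P => HU HV /eqP Heq; by rewrite /xs /ys HU HV Heq.
Qed.

Lemma adj_xy a U V p q : tok a U V -> p < a -> a <= q -> q < nn ->
  adj G (vM a U V p) (vM a U V q) = if [&& U p, V q & cU U p == cV V q] then dd else c.
Proof.
case=> Ha _ _ _ Hp Hq Hqn; have Hpn : p < nn by apply: leq_trans Hp Ha.
rewrite /vM Hp ltnNge Hq /= Hc ?xs_lt ?ys_lt //.
by rewrite xs_ys_eq.
Qed.

Lemma adj_xx a U V p p' : tok a U V -> p < a -> p' < a -> p != p' ->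
  adj G (vM a U V p) (vM a U V p') = al.
Proof.
move=> Hok Hp Hp' Hne; have [Ha _ _ _] := Hok.
have Hpn : p < nn by apply: leq_trans Hp Ha.
have Hpn' : p' < nn by apply: leq_trans Hp' Ha.
rewrite /vM Hp Hp' Hal ?xs_lt //; apply/eqP => E.
case: (ltngtP p p') => H; last by rewrite H eqxx in Hne.
  by have := xs_mono U H Hpn'; rewrite E ltnn.
by have := xs_mono U H Hpn; rewrite E ltnn.
Qed.

Lemma adj_yy a U V q q' : tok a U V -> a <= q -> a <= q' -> q < nn -> q' < nn -> q != q' ->
  adj G (vM a U V q) (vM a U V q') = be.
Proof.
move=> Hok Hq Hq' Hqn Hqn' Hne.
rewrite /vM ltnNge Hq ltnNge Hq' /= Hbe ?ys_lt //; apply/eqP => E.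
case: (ltngtP q q') => H; last by rewrite H eqxx in Hne.
  by have := ys_mono V H Hqn'; rewrite E ltnn; case: dir.
by have := ys_mono V H Hqn; rewrite E ltnn; case: dir.
Qed.

Lemma partnerU a U V p : tok a U V -> U p -> exists q, [/\ q < nn, V q & cV V q = cU U p].
Proof.
case=> Ha HU HV Hcnt Hp; have Hpn : p < nn by apply: leq_trans (HU _ Hp) Ha.
have H1 : 0 < cU U p by rewrite /cU count_pre_S Hp addn1.
have H2 : cU U p <= count V (iota 0 nn) by rewrite -Hcnt; apply: count_pre_mono.
rewrite /cV; case: dir.
  have Hi : (cU U p).-1 < count V (iota 0 nn) by lia.
  case: (ivl Hi) => q [Hq HVq Hcq]; exists q; split => //.
  by rewrite count_pre_S Hcq HVq; lia.
have Hi : count V (iota 0 nn) - cU U p < count V (iota 0 nn) by lia.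
case: (ivl Hi) => q [Hq HVq Hcq]; exists q; split => //.
by rewrite Hcq; lia.
Qed.

Lemma partnerV a U V q : tok a U V -> V q -> exists p, [/\ p < nn, U p & cU U p = cV V q].
Proof.
case=> Ha HU HV Hcnt Hq; have /andP[_ Hqn] := HV _ Hq.
have H12 : 0 < cV V q <= count U (iota 0 nn).
  rewrite Hcnt /cV; case: dir.
    by have := count_pre_mono V Hqn; rewrite !count_pre_S Hq /=; lia.
  have : count V (iota 0 q.+1) <= count V (iota 0 nn) by apply: count_pre_mono.
  rewrite count_pre_S Hq; lia.
have Hi : (cV V q).-1 < count U (iota 0 nn) by lia.
case: (ivl Hi) => p [Hp HUp Hcp]; exists p; split => //.
by rewrite /cU count_pre_S Hcp HUp; lia.
Qed.

Lemma dist_U a U V U' V' p : tok a U V -> tok a U' V' -> U p -> ~~ U' p ->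
  distP G n (vM a U V) (vM a U' V').
Proof.
move=> Hok Hok' HUp HU'p; have [Ha HU HV _] := Hok.
have Hpa := HU _ HUp; have Hpn : p < nn by apply: leq_trans Hpa Ha.
case: (partnerU Hok HUp) => q [Hq HVq Hcq]; have /andP[Haq _] := HV _ HVq.
exists p, q, p, q; split; first by split.
split; first by rewrite !rnk_vM.
  by rewrite !rnk_vM.
rewrite !adj_xy // HUp HVq Hcq eqxx /= (negbTE HU'p) /=.
exact: Hdc.
Qed.

Lemma dist_V a U V U' V' q : tok a U V -> tok a U' V' -> V q -> ~~ V' q ->
  distP G n (vM a U V) (vM a U' V').
Proof.
move=> Hok Hok' HVq HV'q; have [Ha HU HV _] := Hok.
have /andP[Haq Hqn] := HV _ HVq.
case: (partnerV Hok HVq) => p [Hp HUp Hcp]; have Hpa := HU _ HUp.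
exists p, q, p, q; split; first by split.
split; first by rewrite !rnk_vM.
  by rewrite !rnk_vM.
rewrite !adj_xy // HUp HVq Hcp eqxx /= (negbTE HV'q) andbF /=.
exact: Hdc.
Qed.


(* The W family, used when al = dd. *)
Definition Wf (t : {ffun 'I_n -> bool}) p := if p is p'.+1 then tb t p' else false.
Definition aW t := nn - count (Wf t) (iota 0 nn).
Definition UW t := fun p => (p < aW t) && Wf t p.
Definition VW t := fun q => [&& aW t <= q, q < nn & ~~ Wf t q].

Lemma cntW_lt t : count (Wf t) (iota 0 nn) < nn.
Proof.
rewrite /= add0n ltnS.
by rewrite -{2}(size_iota 1 n) count_size.
Qed.

Lemma tokW t : tok (aW t) (UW t) (VW t).
Proof.
have Hlt := cntW_lt t.
have Ha : aW t <= nn by rewrite /aW leq_subr.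
split => //.
- by move=> p /andP[].
- by move=> q /and3P[-> -> _].
rewrite /UW /VW.
rewrite (eq_count (a1 := fun p => (p < aW t) && Wf t p) (a2 := fun p => Wf t p && (p < aW t))); last by move=> p; rewrite andbC.
rewrite count_lt_pre //.
rewrite (eq_in_count (a1 := fun q => [&& aW t <= q, q < nn & ~~ Wf t q]) (a2 := fun q => predC (Wf t) q && (aW t <= q))); last first.
  move=> q; rewrite mem_iota add0n => /andP[_ Hq] /=; rewrite Hq.
  by case: (aW t <= q); case: (Wf t q).
rewrite count_ge_suf // !count_pre_C.
have := count_pre_le (Wf t) (aW t); have := count_pre_mono (Wf t) Ha.
rewrite /aW; lia.
Qed.

Lemma aW_pos t : 0 < aW t.
Proof. by have := cntW_lt t; rewrite /aW; lia. Qed.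

Lemma distW_lt t t' : al = dd -> aW t < aW t' -> distP G n (vM (aW t) (UW t) (VW t)) (vM (aW t') (UW t') (VW t')).
Proof.
move=> Hald Ha.
have Hpos := aW_pos t; have Hok := tokW t; have Hok' := tokW t'.
have [Ha'n _ _ _] := Hok'.
have Han : aW t < nn by apply: leq_trans Ha Ha'n.
exists 0, (aW t), 0, (aW t); split; first by split.
split; first by rewrite !rnk_vM.
  by rewrite !rnk_vM.
have H0a' : 0 < aW t' by apply: leq_ltn_trans Ha.
have Hne0 : 0 != aW t by rewrite eq_sym -lt0n.
rewrite (adj_xy Hok Hpos (leqnn _) Han) (adj_xx Hok' H0a' Ha Hne0).
rewrite /UW /= andbF /= Hald eq_sym; exact: Hdc.
Qed.

Lemma WfE t t' : t != t' -> exists p, p < nn /\ Wf t p != Wf t' p.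
Proof. by case/ffun_neq => j [Hj Hne]; exists j.+1. Qed.

Lemma distW t t' : al = dd -> t != t' -> distP G n (vM (aW t) (UW t) (VW t)) (vM (aW t') (UW t') (VW t')).
Proof.
move=> Hald Hne.
case: (ltngtP (aW t) (aW t')) => Ha.
- exact: distW_lt.
- exact/distP_sym/distW_lt.
have Hok := tokW t; have Hok' := tokW t'.
rewrite Ha in Hok *.
case: (WfE Hne) => p [Hp Hdiff].
case: (ltnP p (aW t')) => Hpa.
  have HU : UW t p != UW t' p by rewrite /UW Ha Hpa.
  case HUp: (UW t p) HU => /= HU.
    exact: (dist_U Hok Hok' HUp).
  have H1 : UW t' p by move: HU; case: (UW t' p).
  have H2 : ~~ UW t p by rewrite HUp.
  exact/distP_sym/(dist_U Hok' Hok H1 H2).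
have HV : VW t p != VW t' p by rewrite /VW Ha Hpa Hp /=; move: Hdiff; case: (Wf t p); case: (Wf t' p).
case HVp: (VW t p) HV => /= HV.
  exact: (dist_V Hok Hok' HVp).
have H1 : VW t' p by move: HV; case: (VW t' p).
have H2 : ~~ VW t p by rewrite HVp.
exact/distP_sym/(dist_V Hok' Hok H1 H2).
Qed.


(* The even family, used when al = c. *)
Definition Sf (t : {ffun 'I_n -> bool}) p :=
  if p is p'.+1 then tb t p' else odd (count (tb t) (iota 0 n)).
Definition mE t := (count (Sf t) (iota 0 nn))./2.
Definition QE t p := count (Sf t) (iota 0 p) < mE t.
Definition aE t := if mE t == 0 then nn else count (QE t) (iota 0 nn).
Definition UE t := fun p => (p < aE t) && Sf t p.
Definition VE t := fun q => [&& aE t <= q, q < nn & Sf t q].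

Lemma cntS t : count (Sf t) (iota 0 nn) = (mE t).*2.
Proof.
have E : count (Sf t) (iota 0 nn) = odd (count (tb t) (iota 0 n)) + count (tb t) (iota 0 n).
  by rewrite /= -[1]addn0 iotaDl count_map.
rewrite /mE E even_halfK //.
by rewrite oddD oddb addbb.
Qed.

Lemma QE_down t p p' : p <= p' -> QE t p' -> QE t p.
Proof. by rewrite /QE => H; apply: leq_ltn_trans (count_pre_mono _ H). Qed.

Lemma aE_spec t p : mE t != 0 -> p < nn -> (p < aE t) = QE t p.
Proof.
move=> Hm Hp; rewrite /aE (negbTE Hm).
by apply: count_downclosed => // q q'; apply: QE_down.
Qed.

Lemma aE_pos t : mE t != 0 -> 0 < aE t.
Proof. by move=> Hm; rewrite aE_spec // /QE /= lt0n. Qed.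

Lemma aE_lt t : mE t != 0 -> aE t < nn.
Proof.
move=> Hm; have Hn : ~~ QE t n.
  rewrite /QE -leqNgt; have := cntS t; rewrite count_pre_S.
  by move: Hm; case: (Sf t n) => /=; lia.
by rewrite ltnS leqNgt aE_spec.
Qed.

Lemma cnt_aE t : mE t != 0 -> count (Sf t) (iota 0 (aE t)) = mE t /\ Sf t (aE t).-1.
Proof.
move=> Hm; have Hpos := aE_pos Hm; have Hlt := aE_lt Hm.
have H1 : QE t (aE t).-1 by rewrite -aE_spec ?prednK //; lia.
have H2 : ~~ QE t (aE t) by rewrite -aE_spec // ltnn.
move: H1 H2; rewrite /QE -{2 3}(prednK Hpos) count_pre_S.
case: (Sf t (aE t).-1) => /=; lia.
Qed.

Lemma tokE t : tok (aE t) (UE t) (VE t).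
Proof.
have Ha : aE t <= nn.
  rewrite /aE; case: (mE t == 0) => //.
  by rewrite -{2}(size_iota 0 nn) count_size.
split => //.
- by move=> p /andP[].
- by move=> q /and3P[-> -> _].
rewrite /UE /VE.
rewrite (eq_count (a1 := fun p => (p < aE t) && Sf t p) (a2 := fun p => Sf t p && (p < aE t))); last by move=> p; rewrite andbC.
rewrite count_lt_pre //.
rewrite (eq_in_count (a1 := fun q => [&& aE t <= q, q < nn & Sf t q]) (a2 := fun q => Sf t q && (aE t <= q))); last first.
  move=> q; rewrite mem_iota add0n => /andP[_ Hq] /=; rewrite Hq.
  by case: (aE t <= q); case: (Sf t q).
rewrite count_ge_suf //.
case: (eqVneq (mE t) 0) => Hm.
  have Ha' : aE t = nn by rewrite /aE Hm.
  by rewrite Ha' subnn cntS Hm.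
by have [-> _] := cnt_aE Hm; rewrite cntS; lia.
Qed.

Lemma UE_last t : mE t != 0 -> UE t (aE t).-1.
Proof.
move=> Hm; have Hpos := aE_pos Hm; have [_ HS] := cnt_aE Hm.
by rewrite /UE HS andbT; lia.
Qed.

Lemma mE_ne0 t : aE t < nn -> mE t != 0.
Proof. by rewrite /aE; case: (mE t == 0) => //; rewrite ltnn. Qed.

Lemma cU_incr (U : pred nat) p p' : p < p' -> U p' -> cU U p < cU U p'.
Proof.
move=> H HU; rewrite /cU (count_pre_S U p') HU addn1 ltnS; exact: count_pre_mono.
Qed.

Lemma distE_lt t t' : al = c -> aE t < aE t' ->
  distP G n (vM (aE t) (UE t) (VE t)) (vM (aE t') (UE t') (VE t')).
Proof.
move=> Halc Ha.
have Hok := tokE t; have Hok' := tokE t'.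
have [Ha'n _ _ _] := Hok'; have [Han HUt HVt _] := Hok; have [_ HUt' HVt' _] := Hok'.
have Hlt : aE t < nn by apply: leq_trans Ha Ha'n.
have Hm := mE_ne0 Hlt.
have Hpos := aE_pos Hm.
have HU0 : UE t (aE t).-1 := UE_last Hm.
have Hp0a : (aE t).-1 < aE t by rewrite ltn_predL.
have Hp0n : (aE t).-1 < nn by apply: ltn_trans Hp0a Hlt.
move: HU0 Hp0a Hp0n; move Ep0: (aE t).-1 => p0 HU0 Hp0a Hp0n.
case: (partnerU Hok HU0) => q [Hqn HVq Hcq].
have /andP[Haq _] := HVt _ HVq.
have Hp0q : p0 != q by apply/eqP => E; move: Hp0a; rewrite E ltnNge Haq.
have Htie : adj G (vM (aE t) (UE t) (VE t) p0) (vM (aE t) (UE t) (VE t) q) = dd.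
  by rewrite (adj_xy Hok Hp0a Haq Hqn) HU0 HVq Hcq eqxx.
have Hp0a' : p0 < aE t' by apply: ltn_trans Ha.
case: (ltnP q (aE t')) => Hqa'.
  exists p0, q, p0, q; split; first by split.
  split; [by rewrite !rnk_vM | by rewrite !rnk_vM | ].
  by rewrite Htie (adj_xx Hok' Hp0a' Hqa' Hp0q) Halc.
case Ht': [&& UE t' p0, VE t' q & cU (UE t') p0 == cV (VE t') q]; last first.
  exists p0, q, p0, q; split; first by split.
  split; [by rewrite !rnk_vM | by rewrite !rnk_vM | ].
  by rewrite Htie (adj_xy Hok' Hp0a' Hqa' Hqn) Ht'.
case/and3P: Ht' => HU0' HVq' /eqP Hcq'.
have Hm' : mE t' != 0 by apply: mE_ne0; apply: leq_ltn_trans Hqa' Hqn.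
have Hpos' := aE_pos Hm'.
have HU1 : UE t' (aE t').-1 := UE_last Hm'.
have Hp1a' : (aE t').-1 < aE t' by rewrite ltn_predL.
have Hap1 : aE t <= (aE t').-1 by rewrite -ltnS prednK.
have Hp01 : p0 < (aE t').-1 by rewrite -Ep0; apply: leq_trans Hap1; rewrite ltn_predL.
move: HU1 Hp1a' Hap1 Hp01; move: (aE t').-1 => p1 HU1 Hp1a' Hap1 Hp01.
case: (partnerU Hok' HU1) => q1 [Hq1n HVq1 Hcq1].
have /andP[Ha'q1 _] := HVt' _ HVq1.
have Hp1n : p1 < nn by apply: leq_trans Hp1a' Ha'n.
have Hp1q1 : p1 != q1 by apply/eqP => E; move: Hp1a'; rewrite E ltnNge Ha'q1.
have Hp1q : p1 != q by apply/eqP => E; move: Hp1a'; rewrite E ltnNge Hqa'.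
have Haq1 : aE t <= q1 by apply: leq_trans (ltnW Ha) Ha'q1.
case: (eqVneq be dd) => Hbe'.
  exists p1, q, p1, q; split; first by split.
  split; [by rewrite !rnk_vM | by rewrite !rnk_vM | ].
  rewrite (adj_yy Hok Hap1 Haq Hp1n Hqn Hp1q) (adj_xy Hok' Hp1a' Hqa' Hqn) Hbe'.
  have -> : cU (UE t') p1 == cV (VE t') q = false.
    by apply/negbTE; rewrite -Hcq' neq_ltn (cU_incr Hp01 HU1) orbT.
  by rewrite !andbF.
exists p1, q1, p1, q1; split; first by split.
split; [by rewrite !rnk_vM | by rewrite !rnk_vM | ].
rewrite (adj_yy Hok Hap1 Haq1 Hp1n Hq1n Hp1q1) (adj_xy Hok' Hp1a' Ha'q1 Hq1n).
by rewrite HU1 HVq1 Hcq1 eqxx.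
Qed.

Lemma SfE t t' : t != t' -> exists p, p < nn /\ Sf t p != Sf t' p.
Proof. by case/ffun_neq => j [Hj Hne]; exists j.+1. Qed.

Lemma distE t t' : al = c -> t != t' ->
  distP G n (vM (aE t) (UE t) (VE t)) (vM (aE t') (UE t') (VE t')).
Proof.
move=> Halc Hne.
case: (ltngtP (aE t) (aE t')) => Ha.
- exact: distE_lt.
- exact/distP_sym/distE_lt.
have Hok := tokE t; have Hok' := tokE t'.
rewrite Ha in Hok *.
case: (SfE Hne) => p [Hp Hdiff].
case: (ltnP p (aE t')) => Hpa.
  have HU : UE t p != UE t' p by rewrite /UE Ha Hpa.
  case HUp: (UE t p) HU => /= HU.
    exact: (dist_U Hok Hok' HUp).
  have H1 : UE t' p by move: HU; case: (UE t' p).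
  have H2 : ~~ UE t p by rewrite HUp.
  exact/distP_sym/(dist_U Hok' Hok H1 H2).
have HV : VE t p != VE t' p by rewrite /VE Ha Hpa Hp.
case HVp: (VE t p) HV => /= HV.
  exact: (dist_V Hok Hok' HVp).
have H1 : VE t' p by move: HV; case: (VE t' p).
have H2 : ~~ VE t p by rewrite HVp.
exact/distP_sym/(dist_V Hok' Hok H1 H2).
Qed.

Lemma mtype_count : 2 ^ n <= #|P_n P n.+1|.
Proof.
have Hcard : 2 ^ n <= #|{ffun 'I_n -> bool}| by rewrite card_ffun card_bool card_ord.
case: (eqVneq al dd) => Hald.
  apply: (@count_framework P N G n _ (fun t => vM (aW t) (UW t) (VW t)) Hher HG Hcard).
    by move=> t i j Hi Hj; apply: vM_inj (tokW t) Hi Hj.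
  by move=> t t' Hne; apply: distW.
have Halc : al = c by move: Hald Hdc; case: al; case: dd; case: c.
apply: (@count_framework P N G n _ (fun t => vM (aE t) (UE t) (VE t)) Hher HG Hcard).
  by move=> t i j Hi Hj; apply: vM_inj (tokE t) Hi Hj.
by move=> t t' Hne; apply: distE.
Qed.

End MType.


Section Ramsey.
Variable C : finType.

Lemma size_sum_count (f : nat -> C) (s : seq nat) :
  size s = \sum_(c : C) count (fun u => f u == c) s.
Proof.
elim: s => [|x s IH] /=; first by rewrite big1.
rewrite big_split /= -IH (bigD1 (f x)) //= eqxx big1 ?addn0 ?add1n //.
by move=> c; rewrite ?andTb eq_sym => /negbTE ->.
Qed.

Lemma pigeon (f : nat -> C) (s : seq nat) k : 0 < #|C| -> #|C| * k <= size s ->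
  exists c, k <= count (fun u => f u == c) s.
Proof.
move=> HC Hs; case: k Hs => [|k] Hs.
  by case/card_gt0P: HC => c _; exists c.
case: (boolP [exists c, k.+1 <= count (fun u => f u == c) s]) => [/existsP //|].
rewrite negb_exists => /forallP H; exfalso.
have : size s <= #|C| * k.
  rewrite (size_sum_count f) -sum_nat_const; apply: leq_sum => c _.
  by have := H c; rewrite -ltnNge ltnS.
move: Hs; rewrite mulnS; lia.
Qed.

Fixpoint gR r := if r is r'.+1 then #|C| * gR r' + 1 else 0.

Variable chi : nat -> nat -> C.

Lemma endhom r (S : seq nat) : 0 < #|C| -> sorted ltn S -> gR r <= size S ->
  exists (v : nat -> nat) (kap : nat -> C),
    [/\ forall i, i < r -> v i \in S,
        forall i j, i < j -> j < r -> v i < v j &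
        forall i j, i < j -> j < r -> chi (v i) (v j) = kap i].
Proof.
move=> HC; elim: r S => [|r IH] S HS Hsz.
  by exists (fun _ => 0), (fun _ => chi 0 0); split.
case: S HS Hsz => [|v0 S'] HS Hsz; first by rewrite /= addn1 in Hsz.
have Hsz' : #|C| * gR r <= size S' by move: Hsz; rewrite /= addn1 ltnS.
case: (pigeon (chi v0) HC Hsz') => c Hc.
set S'' := [seq u <- S' | chi v0 u == c].
have HS'' : sorted ltn S''.
  by apply: sorted_filter; [exact: ltn_trans | exact: (path_sorted HS)].
have Hall := order_path_min ltn_trans HS.
case: (IH S'' HS''); first by rewrite size_filter.
move=> v [kap [Hin Hinc Hcol]].
exists (fun i => if i is i'.+1 then v i' else v0), (fun i => if i is i'.+1 then kap i' else c).
split.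
- case=> [|i] Hi; first by rewrite inE eqxx.
  by rewrite inE; apply/orP; right; have := Hin i Hi; rewrite mem_filter => /andP[].
- case=> [|i] [|j] // Hij Hj.
    by have := Hin j Hj; rewrite mem_filter => /andP[_ /(allP Hall)].
  by apply: Hinc.
- case=> [|i] [|j] // Hij Hj.
    by have := Hin j Hj; rewrite mem_filter => /andP[/eqP].
  by apply: Hcol.
Qed.

Lemma ramsey_gen m : 0 < #|C| -> exists (b : nat -> nat) (kappa : C),
  [/\ forall i j, i < j -> j < m -> b i < b j,
      forall i, i < m -> b i < gR (#|C| * m) &
      forall i j, i < j -> j < m -> chi (b i) (b j) = kappa].
Proof.
move=> HC; set r := #|C| * m.
case: (endhom (r := r) HC (iota_ltn_sorted 0 (gR r))); first by rewrite size_iota.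
move=> v [kap [Hin Hinc Hcol]].
have : #|C| * m <= size (iota 0 r) by rewrite size_iota.
case/(pigeon kap HC) => c Hc.
set I := [seq i <- iota 0 r | kap i == c].
have HI : sorted ltn I by apply: sorted_filter; [exact: ltn_trans | exact: iota_ltn_sorted].
have HsI : m <= size I by rewrite size_filter.
have HIr : forall i, i < size I -> nth 0 I i < r /\ kap (nth 0 I i) = c.
  move=> i Hi; have := mem_nth 0 Hi; rewrite mem_filter mem_iota add0n.
  by case/andP=> /eqP -> /andP[_ ->].
exists (fun i => v (nth 0 I i)), c; split.
- move=> i j Hij Hj; have Hjs : j < size I by apply: leq_trans HsI.
  have Hi : i < size I by apply: ltn_trans Hjs.
  apply: Hinc; last by case: (HIr j Hjs).
  by apply: (sorted_ltn_nth ltn_trans) => //; rewrite inE.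
- move=> i Hi; have Hs : i < size I by apply: leq_trans HsI.
  have := Hin _ (proj1 (HIr i Hs)); by rewrite mem_iota.
- move=> i j Hij Hj; have Hjs : j < size I by apply: leq_trans HsI.
  have Hi : i < size I by apply: ltn_trans Hjs.
  rewrite Hcol; first by case: (HIr i Hi).
    by apply: (sorted_ltn_nth ltn_trans) => //; rewrite inE.
  by case: (HIr j Hjs).
Qed.

End Ramsey.


Definition o0 : 'I_4 := @Ordinal 4 0 isT.
Definition o1 : 'I_4 := @Ordinal 4 1 isT.
Definition o2 : 'I_4 := @Ordinal 4 2 isT.
Definition o3 : 'I_4 := @Ordinal 4 3 isT.

Lemma half_mono_idx (B : nat -> nat) (K : nat) i j :
  (forall s t, s < t -> t < K -> B s < B t) -> i < j -> j./2 < K ->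
  (B i./2).*2 + odd i < (B j./2).*2 + odd j.
Proof.
move=> HB Hij HjK.
have Hh : i./2 <= j./2 by apply: half_leq; apply: ltnW.
move: Hh; rewrite leq_eqVlt => /orP[/eqP Eh|Hh].
  rewrite Eh ltn_add2l.
  have Ei := odd_double_half i; have Ej := odd_double_half j.
  move: Hij; rewrite -Ei -Ej Eh; case: (odd i); case: (odd j) => //=; lia.
rewrite dbl_lt ?HB //; last by rewrite neq_ltn HB.
Qed.

Lemma half_lt j K : j < 2 * K -> j./2 < K.
Proof. move=> H; lia. Qed.

Lemma half_ltS j K : 0 < K -> j < 2 * K.-1 -> (j./2).+1 < K.
Proof. move=> H1 H2; lia. Qed.

Lemma half_lt1 j K : 0 < K -> j < 2 * K.-1 -> j./2 < K.-1.
Proof. move=> H1 H2; lia. Qed.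

Lemma predS_lt K : 0 < K -> K.-1 < K.
Proof. move=> H; lia. Qed.

Section Type2.
Variables (P : oprop) (N : nat) (G : ograph N) (x y : nat -> 'I_N) (k : nat) (dir : bool) (n : nat).
Hypotheses (Hher : hereditary P) (HG : G \in P_n P N).
Hypothesis Hx : forall i j, i < j -> j < 2 * k -> x i < x j.
Hypothesis Hy : forall i j, i < j -> j < 2 * k -> if dir then y i < y j else y j < y i.
Hypothesis Hxy : forall i j, i < 2 * k -> j < 2 * k -> x i < y j.
Hypothesis Halt : forall i, i.+1 < 2 * k -> adj G (x i) (y i) = ~~ adj G (x i.+1) (y i.+1).

Definition LL := (2 * n.+1).+1 * n.+2 + n.+2.
Local Notation Ccol := {ffun 'I_4 * bool * bool -> bool}.
Hypothesis Hk : gR Ccol (#|Ccol| * LL) <= k.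

Lemma HGg : is_graph G. Proof. by move: HG; rewrite inE => /andP[]. Qed.

Definition xb s (p : bool) := x (s.*2 + p).
Definition yb s (p : bool) := y (s.*2 + p).

Definition chi (s t : nat) : Ccol := [ffun z : 'I_4 * bool * bool =>
  let: (ty, p, q) := z in
  match val ty with
  | 0 => adj G (xb s p) (xb t q)
  | 1 => adj G (yb s p) (yb t q)
  | 2 => adj G (xb s p) (yb t q)
  | _ => adj G (xb t q) (yb s p)
  end].

Lemma adj_diag i : i < 2 * k -> adj G (x i) (y i) = adj G (x 0) (y 0) (+) odd i.
Proof.
elim: i => [|i IH] Hi; first by rewrite addbF.
move: (Halt Hi) (IH (ltnW Hi)) => -> /=.
by case: (adj G (x i.+1) (y i.+1)); case: (odd i); case: (adj G (x 0) (y 0)).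
Qed.

Lemma idx_lt2 s (p : bool) : s < k -> s.*2 + p < 2 * k.
Proof. by case: p; lia. Qed.

Lemma type2_count : 2 ^ n <= #|P_n P n.+1|.
Proof.
have HC : 0 < #|Ccol| by rewrite card_ffun card_bool expn_gt0.
case: (ramsey_gen chi LL HC) => b [kap [Hb Hbk Hcol]].
have Hbk' : forall i, i < LL -> b i < k by move=> i Hi; apply: leq_trans (Hbk i Hi) Hk.
have Hgr := HGg.
have KE : forall i j, i < j -> j < LL -> forall ty p q, chi (b i) (b j) (ty, p, q) = kap (ty, p, q).
  by move=> i j Hij Hj ty p q; rewrite Hcol.
pose d0 := adj G (x 0) (y 0).
have CS : forall p : bool,
  [/\ forall s t, s < t -> t < LL -> xb (b s) p < xb (b t) p,
      forall s t, s < t -> t < LL -> if dir then yb (b s) p < yb (b t) p else yb (b t) p < yb (b s) p &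
      forall s t, s < LL -> t < LL -> xb (b s) p < yb (b t) p] /\
  [/\ forall s t, s < LL -> t < LL -> s != t -> adj G (xb (b s) p) (xb (b t) p) = kap (o0, p, p),
      forall s t, s < LL -> t < LL -> s != t -> adj G (yb (b s) p) (yb (b t) p) = kap (o1, p, p) &
      forall s t, s < LL -> t < LL -> adj G (xb (b s) p) (yb (b t) p) =
        if s < t then kap (o2, p, p) else if t < s then kap (o3, p, p) else d0 (+) p].
  move=> p; split; split.
  - move=> s t Hst Ht; apply: Hx; last by apply: idx_lt2; apply: Hbk'.
    by rewrite dbl_lt ?Hb // neq_ltn Hb.
  - move=> s t Hst Ht; apply: Hy; last by apply: idx_lt2; apply: Hbk'.
    by rewrite dbl_lt ?Hb // neq_ltn Hb.
  - by move=> s t Hs Ht; apply: Hxy; apply: idx_lt2; apply: Hbk'.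
  - move=> s t Hs Ht Hne; case: (ltngtP s t) => H; last by rewrite H eqxx in Hne.
      by have := KE _ _ H Ht o0 p p; rewrite ffunE.
    by rewrite adj_sym //; have := KE _ _ H Hs o0 p p; rewrite ffunE.
  - move=> s t Hs Ht Hne; case: (ltngtP s t) => H; last by rewrite H eqxx in Hne.
      by have := KE _ _ H Ht o1 p p; rewrite ffunE.
    by rewrite adj_sym //; have := KE _ _ H Hs o1 p p; rewrite ffunE.
  - move=> s t Hs Ht; case: (ltngtP s t) => H.
    + by have := KE _ _ H Ht o2 p p; rewrite ffunE.
    + by have := KE _ _ H Hs o3 p p; rewrite ffunE.
    + by subst t; rewrite /xb /yb adj_diag ?idx_lt2 ?Hbk' // odd_dbl.
have HLn : n < LL by rewrite /LL; apply: leq_trans (leq_addl _ _); lia.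
have HLm : (2 * n.+1).+1 * n.+2 <= LL by rewrite /LL leq_addr.
case: (boolP [exists p : bool, kap (o2, p, p) != kap (o3, p, p)]).
  case/existsP => p Hp; have [[HX1 HY1 HXY1] [Hal1 Hbe1 Hc1]] := CS p.
  apply: (ctype_count (pf := kap (o0, p, p) == kap (o3, p, p)) Hher HG HX1 HY1 HXY1 Hal1 Hc1 HLn Hp).
  move: Hp; case: (kap (o0, p, p)); case: (kap (o2, p, p)); case: (kap (o3, p, p)) => //.
rewrite negb_exists => /forallP Hc12.
have Hc12' : forall p : bool, kap (o3, p, p) = kap (o2, p, p) by move=> p; have := Hc12 p; rewrite negbK => /eqP.
case: (boolP [exists p : bool, (d0 (+) p) != kap (o2, p, p)]).
  case/existsP => p Hp; have [[HX1 HY1 HXY1] [Hal1 Hbe1 Hc1]] := CS p.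
  apply: (mtype_count Hher HG HX1 HY1 HXY1 Hal1 Hbe1 _ Hp HLm).
  by move=> s t Hs Ht; rewrite Hc1 // Hc12'; case: (ltngtP s t).
rewrite negb_exists => /forallP Hd.
have Hd' : forall p : bool, kap (o2, p, p) = d0 (+) p by move=> p; have := Hd p; rewrite negbK => /eqP.
have HLpos : 0 < LL by apply: leq_ltn_trans HLn.
have HK : n <= LL.-1 by rewrite -ltnS prednK.
case: (eqVneq (kap (o2, true, false)) (kap (o2, false, false))) => Hk10; last first.
  (* vertex y of the last block sees alternating x's *)
  apply: (@type1_count P N G (yb (b LL.-1) false) (fun i => xb (b i./2) (odd i)) LL.-1 true n Hher HG HK).
  - move=> i j Hij Hj; rewrite /xb; apply: Hx.
      apply: (half_mono_idx (K := LL)) => //.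
      by apply: ltn_trans (half_lt1 HLpos Hj) (predS_lt HLpos).
    by apply: idx_lt2; apply: Hbk'; apply: ltn_trans (half_lt1 HLpos Hj) (predS_lt HLpos).
  - right => i Hi; have Hi2 := ltn_trans (half_lt1 HLpos Hi) (predS_lt HLpos).
    have HL1 := predS_lt HLpos.
    by apply: Hxy; apply: idx_lt2; apply: Hbk'.
  - move=> i Hi.
    have E : forall j, j < 2 * LL.-1 -> adj G (yb (b LL.-1) false) (xb (b j./2) (odd j)) = kap (o2, odd j, false).
      move=> j Hj; rewrite adj_sym //.
      have := KE _ _ (half_lt1 HLpos Hj) (predS_lt HLpos) o2 (odd j) false.
      by rewrite ffunE.
    rewrite (E i (ltn_trans (ltnSn i) Hi)) (E i.+1 Hi) /=.
    by move: Hk10; case: (odd i); case: (kap (o2, true, false)); case: (kap (o2, false, false)).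
(* vertex x of the first block sees alternating y's *)
have Hk11 : kap (o2, true, false) != kap (o2, true, true).
  have Hbb : forall bb : bool, bb (+) false != bb (+) true by case.
  by rewrite Hk10 !Hd'; apply: Hbb.
have Hh : forall j, j < 2 * LL.-1 -> (j./2).+1 < LL by move=> j; apply: half_ltS.
apply: (@type1_count P N G (xb (b 0) true) (fun i => yb (b (i./2).+1) (odd i)) LL.-1 dir n Hher HG HK).
- move=> i j Hij Hj; rewrite /yb; apply: Hy.
    apply: (half_mono_idx (B := fun s => b s.+1) (K := LL.-1)) => //.
      by move=> s t Hst Ht; apply: Hb; rewrite // -(prednK HLpos).
    exact: half_lt1.
  by apply: idx_lt2; apply: Hbk'; apply: Hh.
- left => i Hi; have Hi2 := Hh i Hi.
  by apply: Hxy; apply: idx_lt2; apply: Hbk'.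
- move=> i Hi.
  have E : forall j, j < 2 * LL.-1 -> adj G (xb (b 0) true) (yb (b (j./2).+1) (odd j)) = kap (o2, true, odd j).
    by move=> j Hj; have := KE _ _ (ltn0Sn j./2) (Hh j Hj) o2 true (odd j); rewrite ffunE.
  rewrite (E i (ltn_trans (ltnSn i) Hi)) (E i.+1 Hi) /=.
  by move: Hk11; case: (odd i); case: (kap (o2, true, false)); case: (kap (o2, true, true)).
Qed.
End Type2.


Lemma incr_le N len (x : nat -> 'I_N) i j : incr_upto len x -> i <= j -> j < len -> x i <= x j.
Proof.
move=> H; rewrite leq_eqVlt => /orP[/eqP ->|Hij] Hj //.
by apply: ltnW; apply: H.
Qed.

Lemma decr_le N len (x : nat -> 'I_N) i j : decr_upto len x -> i <= j -> j < len -> x j <= x i.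
Proof.
move=> H; rewrite leq_eqVlt => /orP[/eqP ->|Hij] Hj //.
by apply: ltnW; apply: H.
Qed.

Theorem lemma5 (P : oprop) :
  hereditary P ->
  (forall K : nat, exists k : nat, K <= k /\
     exists (n : nat) (G : ograph n),
       G \in P_n P n /\ (kstruct1 G k \/ kstruct2 G k)) ->
  forall n : nat, 2 ^ (n - 1) <= #|P_n P n|.
Proof.
move=> Hher Hyp [|n].
  case: (Hyp 0) => k [_ [N [G [HG _]]]].
  have f : 'I_0 -> 'I_N by case.
  have Hf : strictly_increasing f by case.
  rewrite expn0 card_gt0; apply/set0Pn; exists (induced G f).
  move: HG; rewrite !inE => /andP[HG HP]; apply/andP; split.
    exact: induced_is_graph.
  exact: Hher.
rewrite subn1 /=.
set Kram := gR {ffun 'I_4 * bool * bool -> bool} (#|{ffun 'I_4 * bool * bool -> bool}| * LL n).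
case: (Hyp (Kram + n)) => k [Hk [N [G [HG Hst]]]].
have HkR : Kram <= k by apply: leq_trans Hk; apply: leq_addr.
have Hkn : n <= k by apply: leq_trans Hk; apply: leq_addl.
case: Hst => [[y [x [Hinc [Hside Halt]]]]|[[x [y [Hx [Hy [Hxy Halt]]]]]|[x [y [Hx [Hy [Hxy Halt]]]]]]].
- apply: (@type1_count P N G y x k true n Hher HG Hkn) => //.
  case: Hside => Hs; [left|right] => i Hi.
    by apply: leq_trans Hs _; apply: incr_le Hinc _ Hi.
  apply: leq_ltn_trans Hs; apply: incr_le Hinc _ _; lia.
- apply: (@type2_count P N G x y k true n Hher HG Hx Hy _ Halt HkR).
  move=> i j Hi Hj; apply: leq_ltn_trans (incr_le Hx (_ : i <= (2 * k).-1) _) _; try lia.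
  by apply: leq_trans Hxy _; apply: incr_le Hy _ Hj.
- apply: (@type2_count P N G x y k false n Hher HG Hx Hy _ Halt HkR).
  move=> i j Hi Hj; apply: leq_ltn_trans (incr_le Hx (_ : i <= (2 * k).-1) _) _; try lia.
  apply: leq_trans Hxy _; apply: decr_le Hy _ _; lia.
Qed.
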